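(* Let $d\ge 2$, $x\in\mathbb{R}^d$, $i\in\{1,\dots,d\}$, and for $y\in\mathbb{R}^d$ write $y_{-i} := (y_1,\dots,y_{i-1},y_{i+1},\dots,y_d)^\top\in\mathbb{R}^{d-1}$. Then: 1. If $z = \Pi_{\mathcal{P}_{d,\text{even}}}(x)$ and $z_i=1$, then $z_{-i} = \Pi_{\mathcal{P}_{d-1,\text{odd}}}(x_{-i})$. 2. If $z = \Pi_{\mathcal{P}_{d,\text{even}}}(x)$ and $z_i=0$, then $z_{-i} = \Pi_{\mathcal{P}_{d-1,\text{even}}}(x_{-i})$. 3. If $z = \Pi_{\mathcal{P}_{d,\text{odd}}}(x)$ and $z_i=1$, then $z_{-i} = \Pi_{\mathcal{P}_{d-1,\text{even}}}(x_{-i})$. 4. If $z = \Pi_{\mathcal{P}_{d,\text{odd}}}(x)$ and $z_i=0$, then $z_{-i} = \Pi_{\mathcal{P}_{d-1,\text{odd}}}(x_{-i})$.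
   Context: $\mathcal{P}_{k,\text{even}} := \operatorname{conv}\{x\in\{0,1\}^k : \sum_i x_i \text{ even}\}$, $\mathcal{P}_{k,\text{odd}} := \operatorname{conv}\{x\in\{0,1\}^k : \sum_i x_i \text{ odd}\}$; $\Pi_C$ denotes Euclidean projection onto the closed convex set $C$. *)

(* Defs.v *)
From mathcomp Require Import all_boot all_order all_algebra.
From mathcomp Require Import reals.
Set Implicit Arguments. Unset Strict Implicit. Unset Printing Implicit Defensive.
Import Order.TTheory GRing.Theory Num.Theory.
Local Open Scope ring_scope.

Definition weight (k : nat) (b : {ffun 'I_k -> bool}) : nat :=
  (\sum_(j < k) nat_of_bool (b j))%N.

Definition bvec (R : realType) (k : nat) (b : {ffun 'I_k -> bool}) : 'I_k -> R :=
  fun j => (nat_of_bool (b j))%:R.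

Definition parity_polytope (R : realType) (k : nat) (par : bool) : ('I_k -> R) -> Prop :=
  fun y => exists w : {ffun 'I_k -> bool} -> R,
    (forall b, 0 <= w b) /\
    (\sum_(b : {ffun 'I_k -> bool} | odd (weight b) == par) w b = 1) /\
    (forall j, y j = \sum_(b : {ffun 'I_k -> bool} | odd (weight b) == par) w b * @bvec R k b j).

Definition P_even (R : realType) (k : nat) := @parity_polytope R k false.
Definition P_odd (R : realType) (k : nat) := @parity_polytope R k true.

Definition sqdist (R : realType) (k : nat) (x y : 'I_k -> R) : R :=
  \sum_(j < k) (x j - y j) ^+ 2.

Definition is_proj (R : realType) (k : nat) (C : ('I_k -> R) -> Prop) (x z : 'I_k -> R) : Prop :=
  C z /\ forall y, C y -> sqdist x z <= sqdist x y.

Definition drop_coord (R : realType) (d : nat) (i : 'I_d) (y : 'I_d -> R) : 'I_d.-1 -> R :=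
  fun j => y (lift i j).

(* Main.v *)
Require Import Defs.
From mathcomp Require Import all_boot all_order all_algebra.
From mathcomp Require Import reals.
From Stdlib Require Import FunctionalExtensionality.
Import Order.TTheory GRing.Theory Num.Theory.
Local Open Scope ring_scope.

Section Aux.
Variable R : realType.
Variable n : nat.
Variable i : 'I_n.+1.

Definition binsert (v : bool) (c : {ffun 'I_n -> bool}) : {ffun 'I_n.+1 -> bool} :=
  [ffun j => match unlift i j with Some k => c k | None => v end].
Definition bdrop (b : {ffun 'I_n.+1 -> bool}) : {ffun 'I_n -> bool} :=
  [ffun k => b (lift i k)].

Lemma binsert_i v c : binsert v c i = v.
Proof. by rewrite /binsert ffunE unlift_none. Qed.

Lemma binsert_lift v c k : binsert v c (lift i k) = c k.
Proof. by rewrite /binsert ffunE liftK. Qed.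

Lemma bdrop_insert v c : bdrop (binsert v c) = c.
Proof. by apply/ffunP => k; rewrite /bdrop ffunE binsert_lift. Qed.

Lemma binsert_drop v (b : {ffun 'I_n.+1 -> bool}) : b i = v -> binsert v (bdrop b) = b.
Proof.
move=> hb; apply/ffunP => j; rewrite /binsert ffunE.
by case: unliftP => [k ->|->] //; rewrite /bdrop ffunE.
Qed.

Lemma weight_insert v c : weight (binsert v c) = (v + weight c)%N.
Proof.
rewrite /weight (bigD1_ord i) //= binsert_i; congr (_ + _)%N.
by apply: eq_bigr => k _; rewrite binsert_lift.
Qed.

Lemma sum_split (par v : bool) (W : {ffun 'I_n.+1 -> bool} -> R) :
  (forall b, odd (weight b) == par -> b i != v -> W b = 0) ->
  \sum_(b | odd (weight b) == par) W b =
  \sum_(c : {ffun 'I_n -> bool} | odd (weight c) == par (+) v) W (binsert v c).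
Proof.
move=> hW.
rewrite (bigID (fun b : {ffun 'I_n.+1 -> bool} => b i == v)) /= [X in _ + X]big1 ?addr0; last first.
  by move=> b /andP [hp /hW]; apply.
rewrite (reindex_onto (binsert v) bdrop); last first.
  by move=> b /andP [_ /eqP]; apply: binsert_drop.
apply: eq_bigl => c; rewrite binsert_i eqxx bdrop_insert eqxx weight_insert.
rewrite oddD andbT !andbT.
by clear hW; case: v; case: par; case: (odd (weight c)).
Qed.

Lemma sqdist_split (x y : 'I_n.+1 -> R) :
  sqdist x y = (x i - y i) ^+ 2 + sqdist (drop_coord i x) (drop_coord i y).
Proof. by rewrite /sqdist (bigD1_ord i). Qed.

Definition vinsert (v : bool) (y : 'I_n -> R) : 'I_n.+1 -> R :=
  fun j => match unlift i j with Some k => y k | None => (nat_of_bool v)%:R end.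

Lemma drop_vinsert v y : drop_coord i (vinsert v y) = y.
Proof. by apply: functional_extensionality => k; rewrite /drop_coord /vinsert liftK. Qed.

Lemma vinsert_i v y : vinsert v y i = (nat_of_bool v)%:R.
Proof. by rewrite /vinsert unlift_none. Qed.

Lemma polyA (par v : bool) z :
  @parity_polytope R n.+1 par z -> z i = (nat_of_bool v)%:R ->
  @parity_polytope R n (par (+) v) (drop_coord i z).
Proof.
move=> [w [w0 [w1 wz]]] hzi.
have key : forall b, odd (weight b) == par -> b i != v -> w b = 0.
  have hs : \sum_(b | odd (weight b) == par) w b * (b i != v)%:R = 0.
    case: v hzi => hzi.
      have -> : \sum_(b | odd (weight b) == par) w b * (b i != true)%:R =
         \sum_(b | odd (weight b) == par) w b - \sum_(b | odd (weight b) == par) w b * @bvec R _ b i.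
        rewrite -sumrB; apply: eq_bigr => b _; rewrite /bvec.
        by case: (b i); rewrite /= ?mulr1 ?mulr0 ?subr0 ?subrr.
      by rewrite w1 -wz hzi subrr.
    transitivity (z i); last by rewrite hzi.
    rewrite wz; apply: eq_bigr => b _; rewrite /bvec.
    by case: (b i).
  move=> b hb hbi.
  have : w b * (b i != v)%:R = 0.
    by apply: (psumr_eq0P _ hs hb) => c _; apply: mulr_ge0 => //.
  by rewrite hbi mulr1.
exists (fun c => w (binsert v c)); split; first by move=> c; apply: w0.
split.
  by rewrite -w1 (sum_split par v).
move=> k; rewrite /drop_coord wz (sum_split par v).
  by apply: eq_bigr => c _; rewrite /bvec binsert_lift.
by move=> b hb hbi; rewrite key // mul0r.
Qed.

Lemma polyB (par v : bool) y :
  @parity_polytope R n (par (+) v) y ->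
  @parity_polytope R n.+1 par (vinsert v y).
Proof.
move=> [w [w0 [w1 wy]]].
pose W (b : {ffun 'I_n.+1 -> bool}) := if b i == v then w (bdrop b) else 0.
have hW : forall G : {ffun 'I_n.+1 -> bool} -> R,
  \sum_(b | odd (weight b) == par) W b * G b =
  \sum_(c | odd (weight c) == par (+) v) w c * G (binsert v c).
  move=> G; rewrite (sum_split par v).
    by apply: eq_bigr => c _; rewrite /W binsert_i eqxx bdrop_insert.
  by move=> b _ hb; rewrite /W (negbTE hb) mul0r.
exists W; split; first by move=> b; rewrite /W; case: ifP.
split.
  have := hW (fun _ => 1); under eq_bigr do rewrite mulr1.
  by move=> ->; under eq_bigr do rewrite mulr1.
move=> j; rewrite hW.
case: (unliftP i j) => [k ->|->].
  rewrite /vinsert liftK wy; apply: eq_bigr => c _.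
  by rewrite /bvec binsert_lift.
rewrite vinsert_i; under eq_bigr do rewrite /bvec binsert_i.
by rewrite -mulr_suml w1 mul1r.
Qed.

Lemma main_gen (par v : bool) x z :
  is_proj (@parity_polytope R n.+1 par) x z -> z i = (nat_of_bool v)%:R ->
  is_proj (@parity_polytope R n (par (+) v)) (drop_coord i x) (drop_coord i z).
Proof.
move=> [hz hmin] hzi; split; first exact: polyA.
move=> y hy.
have := hmin _ (@polyB par v y hy).
by rewrite !sqdist_split drop_vinsert vinsert_i hzi lerD2l.
Qed.

End Aux.

Theorem theorem5 (R : realType) (d : nat) (hd : (2 <= d)%N) (x : 'I_d -> R) (i : 'I_d) :
  (forall z, is_proj (@P_even R d) x z -> z i = 1 ->
     is_proj (@P_odd R d.-1) (drop_coord i x) (drop_coord i z)) /\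
  (forall z, is_proj (@P_even R d) x z -> z i = 0 ->
     is_proj (@P_even R d.-1) (drop_coord i x) (drop_coord i z)) /\
  (forall z, is_proj (@P_odd R d) x z -> z i = 1 ->
     is_proj (@P_even R d.-1) (drop_coord i x) (drop_coord i z)) /\
  (forall z, is_proj (@P_odd R d) x z -> z i = 0 ->
     is_proj (@P_odd R d.-1) (drop_coord i x) (drop_coord i z)).
Proof.
case: d hd x i => [//|n] _ x i.
split; [|split; [|split]] => z hz hzi.
- by apply: (@main_gen R n i false true x z hz); rewrite hzi.
- by apply: (@main_gen R n i false false x z hz); rewrite hzi.
- by apply: (@main_gen R n i true true x z hz); rewrite hzi.
- by apply: (@main_gen R n i true false x z hz); rewrite hzi.
Qed.
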